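(* Let $A$ be a finite set of vertices of a graph $\Gamma$. Then there exists a subset $B\subseteq A$ with $|B|\le\tfrac34|A|$ such that $$\operatorname{sw}(A)\le\operatorname{Bisec}(A)+\operatorname{sw}(B).$$
   Context: For disjoint vertex sets $B_1,B_2$, $E(B_1,B_2)$ is the set of edges between them. A sweepout $\mathfrak F$ of a finite vertex set $A$ is a nested sequence $\emptyset=F_0\subseteq F_1\subseteq\dots\subseteq F_{|A|}=A$ with $|F_j|=j$; its width is $\operatorname{w}(\mathfrak F)=\max_j|E(F_j,A\setminus F_j)|$, and $\operatorname{sw}(A)$ is the minimum width over all sweepouts of $A$. $\operatorname{Bisec}(A)=\min|E(B_1,B_2)|$ over all decompositions $A=B_1\sqcup B_2$ with $\tfrac14|A|\le|B_i|\le\tfrac34|A|$ for $i=1,2$ (a minimum over an empty set being $+\infty$). *)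

(* Defs.v *)
From HB Require Import structures.
From mathcomp Require Import all_boot all_order.
From mathcomp Require Import finmap.
From mathcomp Require Import boolp.
Set Implicit Arguments. Unset Strict Implicit. Unset Printing Implicit Defensive.
Local Open Scope fset_scope.

Section Graph.
Variables (V : choiceType) (e : rel V).

Definition ecut (B1 B2 : {fset V}) : nat :=
  \sum_(x <- B1) \sum_(y <- B2) (e x y : nat).

Definition sweepout (A : {fset V}) (F : nat -> {fset V}) : Prop :=
  [/\ F 0%N = fset0,
      (forall j, (j < #|` A|)%N -> F j `<=` F j.+1),
      (forall j, (j <= #|` A|)%N -> #|` F j| = j)
    & F #|` A| = A].

Definition width (A : {fset V}) (F : nat -> {fset V}) : nat :=
  \max_(j < (#|` A|).+1) ecut (F j) (A `\` F j).

Definition is_sw_width (A : {fset V}) (w : nat) : bool :=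
  `[< exists F, sweepout A F /\ width A F = w >].

(* sw(A) = minimum width over all sweepouts of A (0 if none existed, which
   never happens). *)
Definition sw (A : {fset V}) : nat :=
  match pselect (exists w, is_sw_width A w) with
  | left h => ex_minn h
  | right _ => 0%N
  end.

Definition bisection (A B1 B2 : {fset V}) : Prop :=
  [/\ B1 `|` B2 = A, [disjoint B1 & B2],
      (#|` A| <= 4 * #|` B1| <= 3 * #|` A|)%N
    & (#|` A| <= 4 * #|` B2| <= 3 * #|` A|)%N].

Definition is_bisec_value (A : {fset V}) (b : nat) : bool :=
  `[< exists B1 B2, bisection A B1 B2 /\ ecut B1 B2 = b >].

(* Bisec(A) in nat extended by +oo, encoded as option nat (None = +oo,
   the minimum over an empty set). *)
Definition Bisec (A : {fset V}) : option nat :=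
  match pselect (exists b, is_bisec_value A b) with
  | left h => Some (ex_minn h)
  | right _ => None
  end.

End Graph.

(* Main.v *)
Require Import Defs.
From HB Require Import structures.
From mathcomp Require Import all_boot all_order.
From mathcomp Require Import finmap.
From mathcomp Require Import boolp.
From mathcomp Require Import zify.
Local Open Scope fset_scope.

Section S.
Variables (V : choiceType) (e : rel V).

Lemma sumU (f : V -> nat) (A1 A2 : {fset V}) : [disjoint A1 & A2] ->
  (\sum_(x <- A1 `|` A2) f x = \sum_(x <- A1) f x + \sum_(x <- A2) f x)%N.
Proof.
move=> d; rewrite (big_fsetID _ (mem A1)); congr (_ + _)%N; apply: eq_fbigl => x;
  rewrite !inE /=.
  by case: (x \in A1); rewrite ?andbF ?andbT.
have := fdisjointP d x; case: (x \in A1) => /= H; last by rewrite andbT.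
by rewrite (negbTE (H isT)).
Qed.

Lemma sum_mono (f : V -> nat) (A B : {fset V}) : A `<=` B ->
  (\sum_(x <- A) f x <= \sum_(x <- B) f x)%N.
Proof.
move=> sAB; have -> : B = A `|` (B `\` A).
  apply/fsetP => x; rewrite !inE; have := fsubsetP sAB x.
  by case: (x \in A); case: (x \in B) => // ->.
rewrite sumU ?leq_addr //; apply/fdisjointP => x; rewrite !inE => ->.
by [].
Qed.

Lemma ecutUl A1 A2 B : [disjoint A1 & A2] ->
  (ecut e (A1 `|` A2) B = ecut e A1 B + ecut e A2 B)%N.
Proof. by move=> d; rewrite /ecut sumU. Qed.

Lemma ecutUr A B1 B2 : [disjoint B1 & B2] ->
  (ecut e A (B1 `|` B2) = ecut e A B1 + ecut e A B2)%N.
Proof. by move=> d; rewrite /ecut -big_split /=; apply: eq_bigr => x _; rewrite sumU. Qed.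

Lemma ecut_mono A A' B B' : A `<=` A' -> B `<=` B' -> (ecut e A B <= ecut e A' B')%N.
Proof.
move=> sA sB; rewrite /ecut; apply: (@leq_trans (\sum_(x <- A') \sum_(y <- B) (e x y : nat))).
  exact: sum_mono.
by apply: leq_sum => x _; apply: sum_mono.
Qed.

Lemma ecut0l B : ecut e fset0 B = 0%N.
Proof. by rewrite /ecut big_seq_fset0. Qed.

Lemma sweep_exists (A : {fset V}) : exists F, sweepout A F.
Proof.
pose s := enum_fset A.
exists (fun j => [fset x in take j s]); split.
- by apply/fsetP => x; rewrite !inE take0.
- move=> j _; apply/fsubsetP => x; rewrite !inE => H.
  by rewrite -(take_takel _ (leqnSn j)) in H; apply: mem_take H.
- move=> j hj; rewrite card_fseq undup_id ?take_uniq ?fset_uniq //.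
  by rewrite size_take; case: ltngtP hj => // ->.
- by apply/fsetP => x; rewrite !inE take_oversize.
Qed.

Lemma cardD (A B : {fset V}) : [disjoint A & B] -> #|` A `|` B| = (#|` A| + #|` B|)%N.
Proof. by move=> d; rewrite cardfsU (eqP d) cardfs0 subn0. Qed.

Lemma sweep_sub (B : {fset V}) G j : sweepout B G -> (j <= #|` B|)%N -> G j `<=` B.
Proof.
case=> _ Hn _ Hend hj.
have H : forall k, G (#|` B| - k)%N `<=` B.
  elim=> [|k IH]; first by rewrite subn0 Hend.
  case: (ltnP k #|` B|) => hk.
    have E : ((#|` B| - k.+1).+1 = #|` B| - k)%N by rewrite subnSK.
    have L : (#|` B| - k.+1 < #|` B|)%N by lia.
    have := Hn _ L; rewrite E => H1.
    exact: (fsubset_trans H1 IH).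
  have -> : (#|` B| - k.+1 = #|` B| - k)%N.
    by lia.
  done.
by have := H (#|` B| - j)%N; rewrite subKn.
Qed.

Lemma width_ge (B : {fset V}) G j : (j <= #|` B|)%N ->
  (ecut e (G j) (B `\` G j) <= width e B G)%N.
Proof.
move=> hj; rewrite /width.
have hj' : (j < (#|` B|).+1)%N by [].
exact: (@leq_bigmax _ (fun i : 'I_(#|` B|).+1 => ecut e (G i) (B `\` G i)) (Ordinal hj')).
Qed.

Lemma sw_le (A : {fset V}) F : sweepout A F -> (sw e A <= width e A F)%N.
Proof.
move=> sF; rewrite /sw; case: pselect => [h|[]]; last first.
  by exists (width e A F); apply/asboolP; exists F.
by case: ex_minnP => m _; apply; apply/asboolP; exists F.
Qed.

Lemma sw_opt (A : {fset V}) : exists F, sweepout A F /\ width e A F = sw e A.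
Proof.
have [F sF] := sweep_exists A.
rewrite /sw; case: pselect => [h|[]]; last first.
  by exists (width e A F); apply/asboolP; exists F.
by case: ex_minnP => m /asboolP [G [sG wG]] _; exists G.
Qed.


Lemma concat_sw (B1 B2 : {fset V}) : [disjoint B1 & B2] ->
  (sw e (B1 `|` B2) <= ecut e B1 B2 + maxn (sw e B1) (sw e B2))%N.
Proof.
move=> d.
have [G1 [s1 w1]] := sw_opt B1; have [G2 [s2 w2]] := sw_opt B2.
have cA : #|` B1 `|` B2| = (#|` B1| + #|` B2|)%N by rewrite cardD.
have sub1 j : (j <= #|` B1|)%N -> G1 j `<=` B1 by apply: sweep_sub s1.
have sub2 j : (j <= #|` B2|)%N -> G2 j `<=` B2 by apply: sweep_sub s2.
have dG k : (k <= #|` B2|)%N -> [disjoint B1 & G2 k].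
  move=> hk; apply/fdisjointP => x xB1; apply: contraNN (fdisjointP d x xB1).
  exact: (fsubsetP (sub2 k hk)).
pose F j := if (j < #|` B1|)%N then G1 j else B1 `|` G2 (j - #|` B1|)%N.
have sF : sweepout (B1 `|` B2) F.
  case: (s1) => a1 b1 c1 d1; case: (s2) => a2 b2 c2 d2; split.
  - rewrite /F; case: ifP => // h0.
    rewrite sub0n a2 fsetU0; apply: cardfs0_eq; move/negbT: h0; rewrite -leqNgt.
    by case: (#|` B1|).
  - move=> j hj; rewrite /F; case: (ltnP j #|` B1|) => h; case: (ltnP j.+1 #|` B1|) => h'.
    + exact: b1.
    + have E : j.+1 = #|` B1| by apply/eqP; rewrite eqn_leq h h'.
      apply: (fsubset_trans (b1 j h)); rewrite E d1; exact: fsubsetUl.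
    + exfalso; lia.
    + apply: fsetUS; rewrite subSn //; apply: b2; lia.
  - move=> j hj; rewrite /F; case: ltnP => h; first by rewrite c1 // ltnW.
    rewrite cardD ?dG ?c2; lia.
  - rewrite /F cA ltnNge leq_addr /= addKn d2 //.
apply: leq_trans (sw_le _ _ sF) _.
rewrite /width; apply/bigmax_leqP => [[j hj]] _ /=.
rewrite /F; case: ltnP => h.
- have sG := sub1 j (ltnW h).
  have -> : (B1 `|` B2) `\` G1 j = (B1 `\` G1 j) `|` B2.
    apply/fsetP => x; rewrite !inE.
    have H1 : (x \in G1 j) ==> (x \in B1) by apply/implyP; exact: (fsubsetP sG x).
    have H2 : (x \in B1) ==> (x \notin B2) by apply/implyP; exact: (fdisjointP d x).
    by move: H1 H2; case: (x \in G1 j); case: (x \in B1); case: (x \in B2).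
  rewrite ecutUr; last first.
    by apply/fdisjointP => x; rewrite !inE => /andP[_]; apply: (fdisjointP d).
  rewrite addnC; apply: leq_add; first exact: ecut_mono.
  apply: leq_trans (@width_ge _ G1 _ (ltnW h)) _; rewrite w1; exact: leq_maxl.
- have hk : (j - #|` B1| <= #|` B2|)%N by lia.
  set k := (j - #|` B1|)%N in hk *.
  have sG := sub2 k hk.
  have -> : (B1 `|` B2) `\` (B1 `|` G2 k) = B2 `\` G2 k.
    apply/fsetP => x; rewrite !inE.
    have H1 : (x \in G2 k) ==> (x \in B2) by apply/implyP; exact: (fsubsetP sG x).
    have H2 : (x \in B1) ==> (x \notin B2) by apply/implyP; exact: (fdisjointP d x).
    by move: H1 H2; case: (x \in G2 k); case: (x \in B1); case: (x \in B2).
  rewrite ecutUl ?dG //; apply: leq_add; first exact: ecut_mono (fsubsetDl _ _).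
  apply: leq_trans (@width_ge _ G2 _ hk) _; rewrite w2; exact: leq_maxr.
Qed.

End S.

Theorem lemma2p5 (V : choiceType) (e : rel V)
  (e_sym : symmetric e) (e_irr : irreflexive e) (A : {fset V}) :
  exists B : {fset V},
    [/\ B `<=` A, (4 * #|` B| <= 3 * #|` A|)%N &
        match Bisec e A with
        | Some b => (sw e A <= b + sw e B)%N
        | None => True
        end].
Proof.
rewrite /Bisec; case: pselect => [h|_]; last first.
  by exists fset0; split; rewrite ?fsub0set ?cardfs0.
case: ex_minnP => b /asboolP [B1 [B2 [[U dj /andP[_ c1] /andP[_ c2]] eb]]] _.
have := @concat_sw _ e _ _ dj; rewrite U eb => H.
case: (leqP (sw e B1) (sw e B2)) => Hs; [exists B2 | exists B1]; split => //.
- by rewrite -U fsubsetUr.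
- by rewrite -(maxn_idPr Hs).
- by rewrite -U fsubsetUl.
- by rewrite -(maxn_idPl (ltnW Hs)).
Qed.
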